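(* For a suitable realisation of a local affine Gaudin model (setting below), whose twist function $\varphi$ has simple zeros $\zeta_1,\dots,\zeta_M$, the momentum $\mathcal P_{\mathcal A}$ of the algebra of observables satisfies $\mathcal P_{\mathcal A}=\sum_{i=1}^M\mathcal Q_i$, where $\mathcal Q_i=-\frac{1}{2\varphi'(\zeta_i)}\int_{\mathbb D}dx\,\kappa\big(\Gamma(\zeta_i,x),\Gamma(\zeta_i,x)\big)$.
   Context: $\mathfrak g$: finite-dimensional simple complex Lie algebra, $\kappa$: minus its Killing form, $C_{12}=I_a\otimes I^a$ for dual bases w.r.t. $\kappa$; $\mathfrak g_0$: real form, fixed points of an antilinear involution $\tau$. $\mathbb D$ is $\mathbb R$ or the circle; $\delta'_{xy}=\partial_x\delta(x-y)$. Data: a finite set of sites $\Sigma=\Sigma_r\sqcup\Sigma_c\sqcup\bar\Sigma_c$ (real sites, complex sites, their conjugates $\bar\alpha$), multiplicities $m_\alpha\ge1$ ($m_{\bar\alpha}=m_\alpha$), levels $\ell^\alpha_{[p]}$, $0\le p\le m_\alpha-1$ (real for real sites, $\ell^{\bar\alpha}_{[p]}=\overline{\ell^\alpha_{[p]}}$), with $\ell^\alpha_{[m_\alpha-1]}\neq0$; pairwise distinct positions $z_\alpha$ (real for real sites, $z_{\bar\alpha}=\overline{z_\alpha}$); a real $\ell^\infty\neq0$. A realisation is a Poisson algebra $\mathcal A$ of local observables of a field theory on $\mathbb D$ containing $\mathfrak g$-valued fields $\mathcal J^\alpha_{[p]}(x)$ with $\{\mathcal J^\alpha_{[p]}{}_1(x),\mathcal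 J^\beta_{[q]}{}_2(y)\}=\delta_{\alpha\beta}([C_{12},\mathcal J^\alpha_{[p+q]}{}_1(x)]\delta_{xy}-\ell^\alpha_{[p+q]}C_{12}\delta'_{xy})$ if $p+q<m_\alpha$ and $0$ otherwise, $\tau(\mathcal J^\alpha_{[p]})=\mathcal J^\alpha_{[p]}$ for real $\alpha$ and $\tau(\mathcal J^\alpha_{[p]})=\mathcal J^{\bar\alpha}_{[p]}$ for complex $\alpha$. Twist function $\varphi(z)=\sum_{\alpha\in\Sigma}\sum_{p=0}^{m_\alpha-1}\frac{\ell^\alpha_{[p]}}{(z-z_\alpha)^{p+1}}-\ell^\infty$; Gaudin Lax matrix $\Gamma(z,x)=\sum_{\alpha}\sum_p\frac{\mathcal J^\alpha_{[p]}(x)}{(z-z_\alpha)^{p+1}}$; $M=\sum_\alpha m_\alpha$. For each $\alpha$, the numbers $\eta^\alpha_{[p]}$, $0\le p\le 2m_\alpha-2$, are the unique solution of $\sum_{p=0}^{m_\alpha-1-r}\eta^\alpha_{[p+q]}\ell^\alpha_{[p+r]}=\delta_{q,r}$ for all $q,r\in\{0,\dots,m_\alpha-1\}$, and $\mathcal D^\alpha_{[p]}=\frac12\sum_{q,r=0,\,q+r\ge p}^{m_\alpha-1}\eta^\alpha_{[q+r-p]}\int_{\mathbb D}dx\,\kappa(\mathcal J^\alpha_{[q]}(x),\mathcal J^\alpha_{[r]}(x))$. The momentum $\mathcal P_{\mathcal A}$ of $\mathcal A$ is the charge whose Hamiltonian flow $\{\mathcal P_{\mathcal A},\cdot\}$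 is $\partial_x$ on all fields of $\mathcal A$. The realisation is called suitable if $\sum_{\alpha\in\Sigma}\mathcal D^\alpha_{[0]}=\mathcal P_{\mathcal A}$. *)

(* Defs.v *)
From HB Require Import structures.
From mathcomp Require Import all_boot all_order all_algebra.
From mathcomp Require Import all_classical all_reals all_analysis.
From mathcomp Require Import complex.
Set Implicit Arguments. Unset Strict Implicit. Unset Printing Implicit Defensive.
Import Order.TTheory GRing.Theory Num.Theory.
Local Open Scope ring_scope.

Section LAG.
Variable R : realType.
Local Notation C := (R[i]).

Variable n : nat.
Local Notation g := ('rV[C]_n).

Definition evec (c : 'I_n) : g := delta_mx 0 c.

Definition is_lie_bracket (br : g -> g -> g) : Prop :=
  [/\ (forall (a : C) u v w, br (a *: u + v) w = a *: br u w + br v w),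
      (forall u v, br u v = - br v u) &
      (forall u v w, br u (br v w) + br v (br w u) + br w (br u v) = 0)].

Definition is_simple_lie (br : g -> g -> g) : Prop :=
  [/\ is_lie_bracket br,
      (exists u v, br u v != 0) &
      (forall U : 'M[C]_n,
          (forall u v, (u <= U)%MS -> (br u v <= U)%MS) ->
          (\rank U == 0)%N || (\rank U == n)%N)].

Definition ad (br : g -> g -> g) (u : g) : 'M[C]_n := lin1_mx (br u).

Definition kappa (br : g -> g -> g) (u v : g) : C := - \tr (ad br u *m ad br v).

Definition is_real_form_inv (br : g -> g -> g) (tau : g -> g) : Prop :=
  [/\ (forall (a : C) u v, tau (a *: u + v) = a^* *: tau u + tau v),
      (forall u, tau (tau u) = u) &
      (forall u v, tau (br u v) = br (tau u) (tau v))].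

(* ---------- the algebra of observables A; A-valued g-fields live in A (x) g = 'rV[A]_n *)
Variable A : comAlgType C.

Definition is_poisson (pb : A -> A -> A) : Prop :=
  [/\ (forall (a : C) x y z, pb (a *: x + y) z = a *: pb x z + pb y z),
      (forall x y, pb x y = - pb y x),
      (forall x y z, pb x (pb y z) + pb y (pb z x) + pb z (pb x y) = 0) &
      (forall x y z, pb x (y * z) = pb x y * z + y * pb x z)].

Definition is_conjA (cj : A -> A) : Prop :=
  [/\ (forall (a : C) x y, cj (a *: x + y) = a^* *: cj x + cj y),
      (forall x y, cj (x * y) = cj x * cj y),
      cj 1 = 1 &
      (forall x, cj (cj x) = x)].

Definition tauA (cj : A -> A) (tau : g -> g) (X : 'rV[A]_n) : 'rV[A]_n :=
  \row_d \sum_c cj (X 0 c) * ((tau (evec c)) 0 d)%:A.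

Definition kappaL (br : g -> g -> g) (u : g) (X : 'rV[A]_n) : A :=
  \sum_c kappa br u (evec c) *: X 0 c.
Definition kappaBr (br : g -> g -> g) (u v : g) (X : 'rV[A]_n) : A :=
  \sum_c kappa br u (br v (evec c)) *: X 0 c.
Definition kappaA (br : g -> g -> g) (X Y : 'rV[A]_n) : A :=
  \sum_c \sum_d kappa br (evec c) (evec d) *: (X 0 c * Y 0 d).

(* ---------- the space D: the line (Dk = None) or a circle of length L (Dk = Some L) *)
Definition test_fun (Dk : option R) (f : R -> R) : Prop :=
  (forall (k : nat) (x : R), derivable (iter k (@derive1 R R) f) x 1) /\
  match Dk with
  | None => exists K : R, forall x, K < `|x| -> f x = 0
  | Some L => forall x, f (x + L) = f x
  end.

Definition linear_int (intD : (R -> A) -> A) : Prop :=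
  forall (a : C) (F G : R -> A),
    intD (fun x => a *: F x + G x) = a *: intD F + intD G.

Variable S : finType.

Definition site_data (bar : S -> S) (m : S -> nat) (lev : S -> nat -> C)
    (zpos : S -> C) (linf : C) : Prop :=
  [/\ (forall a, bar (bar a) = a) /\
      (forall a, m (bar a) = m a),
      (forall a p, lev (bar a) p = (lev a p)^*),
      (forall a, zpos (bar a) = (zpos a)^*),
      (forall a, (0 < m a)%N /\ lev a (m a).-1 != 0) /\
      injective zpos &
      (linf^* = linf /\ linf != 0)].

Definition twist (m : S -> nat) (lev : S -> nat -> C) (zpos : S -> C) (linf : C)
    (z : C) : C :=
  \sum_a \sum_(p < m a) lev a p / (z - zpos a) ^+ p.+1 - linf.
Definition twist' (m : S -> nat) (lev : S -> nat -> C) (zpos : S -> C)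
    (z : C) : C :=
  \sum_a \sum_(p < m a) - (p.+1%:R * lev a p) / (z - zpos a) ^+ p.+2.

Definition smeared (br : g -> g -> g) (intD : (R -> A) -> A)
    (J : S -> nat -> R -> 'rV[A]_n) (f : R -> R) (u : g) (a : S) (p : nat) : A :=
  intD (fun x => ((f x)%:C)%C *: kappaL br u (J a p x)).

Definition current_brackets (Dk : option R) (br : g -> g -> g) (pb : A -> A -> A)
    (intD : (R -> A) -> A) (m : S -> nat) (lev : S -> nat -> C)
    (J : S -> nat -> R -> 'rV[A]_n) : Prop :=
  forall (a b : S) (p q : nat) (u v : g) (f h : R -> R),
    (p < m a)%N -> (q < m b)%N -> test_fun Dk f -> test_fun Dk h ->
    pb (smeared br intD J f u a p) (smeared br intD J h v b q) =
    if (a == b) && (p + q < m a)%N then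
      intD (fun x => ((f x * h x)%:C)%C *: kappaBr br u v (J a (p + q)%N x))
      + (lev a (p + q)%N * kappa br u v) *:
          intD (fun x => ((derive1 f x * h x)%:C)%C *: 1)
    else 0.

Definition is_momentum (Dk : option R) (br : g -> g -> g) (pb : A -> A -> A)
    (intD : (R -> A) -> A) (m : S -> nat) (J : S -> nat -> R -> 'rV[A]_n)
    (P : A) : Prop :=
  forall (a : S) (p : nat) (u : g) (f : R -> R),
    (p < m a)%N -> test_fun Dk f ->
    pb P (smeared br intD J f u a p) = - smeared br intD J (derive1 f) u a p.

Definition eta_sol (m : S -> nat) (lev : S -> nat -> C) (eta : S -> nat -> C) : Prop :=
  forall a (q r : nat), (q < m a)%N -> (r < m a)%N ->
    \sum_(p < m a - r) eta a (p + q)%N * lev a (p + r)%N = (q == r)%:R.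

Definition Dcharge0 (br : g -> g -> g) (intD : (R -> A) -> A) (m : S -> nat)
    (eta : S -> nat -> C) (J : S -> nat -> R -> 'rV[A]_n) (a : S) : A :=
  2^-1 *: \sum_(q < m a) \sum_(r < m a)
     eta a (q + r)%N *: intD (fun x => kappaA br (J a q x) (J a r x)).

Definition Gamma (m : S -> nat) (zpos : S -> C) (J : S -> nat -> R -> 'rV[A]_n)
    (z : C) (x : R) : 'rV[A]_n :=
  \sum_a \sum_(p < m a) ((z - zpos a) ^- p.+1)%:A *: J a p x.

Definition Qcharge (br : g -> g -> g) (intD : (R -> A) -> A) (m : S -> nat)
    (lev : S -> nat -> C) (zpos : S -> C) (J : S -> nat -> R -> 'rV[A]_n)
    (zeta : C) : A :=
  - (2 * twist' m lev zpos zeta)^-1 *: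
      intD (fun x => kappaA br (Gamma m zpos J zeta x) (Gamma m zpos J zeta x)).

End LAG.

(* Main.v *)
Require Import Defs.
From HB Require Import structures.
From mathcomp Require Import all_boot all_order all_algebra.
From mathcomp Require Import all_classical all_reals all_analysis.
From mathcomp Require Import complex.
From mathcomp Require Import ring lra zify.
Import Order.TTheory GRing.Theory Num.Theory.
Local Open Scope ring_scope.
Section Part1.
Variable R : realType.
Local Notation C := (R[i]).
Variables (S : finType) (m : S -> nat) (lev : S -> nat -> C) (zpos : S -> C) (linf : C).
Local Notation M := (\sum_(s0 : S) m s0)%N.

Definition Pe (e : S -> nat) : {poly C} := \prod_c ('X - (zpos c)%:P) ^+ e c.

Lemma Pe_monic e : Pe e \is monic.
Proof. apply: monic_prod => c _; apply: monic_exp; exact: monicXsubC. Qed.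

Lemma size_Pe e : size (Pe e) = (\sum_c e c).+1%N.
Proof.
rewrite /Pe; elim/big_rec2: _ => [|c k p _ IH]; first by rewrite size_poly1.
rewrite size_monicM ?monic_exp ?monicXsubC //; last by rewrite -size_poly_eq0 IH.
by rewrite size_exp_XsubC IH addSn addnS.
Qed.

Lemma horner_Pe e z : (Pe e).[z] = \prod_c (z - zpos c) ^+ e c.
Proof. rewrite /Pe horner_prod; apply: eq_bigr => c _; by rewrite horner_exp hornerXsubC. Qed.

Lemma prod_split (x : S -> C) (f : S -> nat) : (forall c, f c <= m c)%N ->
  \prod_c x c ^+ (m c - f c) * \prod_c x c ^+ f c = \prod_c x c ^+ m c.
Proof. move=> hf; rewrite -big_split; apply: eq_bigr => c _ /=; by rewrite -exprD subnK. Qed.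

Lemma prod_delta (x : S -> C) a k : \prod_c x c ^+ ((c == a) * k)%N = x a ^+ k.
Proof.
rewrite (bigD1 a) //= eqxx mul1n big1 ?mulr1 // => c /negbTE ->; by rewrite mul0n expr0.
Qed.

Lemma sum_delta (a : S) k : (\sum_(c : S) (c == a) * k)%N = k.
Proof.
rewrite (bigD1 a) //= eqxx mul1n big1 ?addn0 // => c /negbTE ->; by rewrite mul0n.
Qed.

Lemma m_le_M (a : S) : (m a <= M)%N.
Proof. by rewrite (bigD1 a) //= leq_addr. Qed.

Lemma sum_sub f : (forall c, f c <= m c)%N -> (\sum_c (m c - f c))%N = (M - \sum_c f c)%N.
Proof.
move=> hf; apply/eqP; rewrite -(eqn_add2r (\sum_c f c)) -big_split /= subnK; last exact: leq_sum.
apply/eqP; apply: eq_bigr => c _; exact: subnK.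
Qed.

Lemma horner_Pe_sub f z : (forall c, f c <= m c)%N -> (forall c, z != zpos c) ->
  (Pe (fun c => m c - f c)%N).[z] = (Pe m).[z] / \prod_c (z - zpos c) ^+ f c.
Proof.
move=> hf hz; rewrite !horner_Pe -(prod_split _ _ hf) mulfK //.
apply/prodf_neq0 => c _; by rewrite expf_neq0 // subr_eq0.
Qed.

Lemma DPe_neq0 z : (forall c, z != zpos c) -> (Pe m).[z] != 0.
Proof. move=> hz; rewrite horner_Pe; apply/prodf_neq0 => c _; by rewrite expf_neq0 // subr_eq0. Qed.

Lemma coef_monic_top (q : {poly C}) k : q \is monic -> size q = k.+1 -> q`_k = 1.
Proof. move=> /monicP hq hs; by rewrite -hq lead_coefE hs. Qed.

Lemma coef_big (q : {poly C}) k : (size q <= k)%N -> q`_k = 0.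
Proof. move=> h; exact: nth_default. Qed.


Definition Wp (ze : C) : {poly C} :=
  \sum_a \sum_(p < m a) \sum_(t < p.+1)
    ((- lev a p / (ze - zpos a) ^+ p.+1) * (ze - zpos a) ^+ t) *:
      (('X - (zpos a)%:P) ^+ (p - t) * Pe (fun c => m c - (c == a) * p.+1)%N).

Lemma delta_le (a : S) (p : nat) : (p < m a)%N -> forall c, ((c == a) * p.+1 <= m c)%N.
Proof. move=> hp c; case: eqP => [->|_]; by rewrite ?mul1n ?mul0n. Qed.

Lemma W_eval ze z : (forall a, ze != zpos a) -> (forall a, z != zpos a) ->
  (z - ze) * (Wp ze).[z] = (Pe m).[z] * (twist m lev zpos linf z - twist m lev zpos linf ze).
Proof.
move=> hze hz; rewrite /twist /Wp opprB addrA subrK -sumrB mulr_sumr horner_sum mulr_sumr.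
apply: eq_bigr => a _; rewrite -sumrB mulr_sumr horner_sum mulr_sumr.
apply: eq_bigr => p _.
rewrite horner_sum.
have E : \sum_(t < p.+1) (((- lev a p / (ze - zpos a) ^+ p.+1) * (ze - zpos a) ^+ t) *:
      (('X - (zpos a)%:P) ^+ (p - t) * Pe (fun c => m c - (c == a) * p.+1)%N)).[z]
  = (- lev a p / (ze - zpos a) ^+ p.+1) * ((Pe m).[z] / (z - zpos a) ^+ p.+1) *
    \sum_(t < p.+1) (z - zpos a) ^+ (p.+1.-1 - t) * (ze - zpos a) ^+ t.
  rewrite mulr_sumr; apply: eq_bigr => t _.
  rewrite hornerZ hornerM horner_exp hornerXsubC (horner_Pe_sub _ _ (delta_le _ _ _)) //.
  rewrite prod_delta /=; ring.
rewrite E; set Ssum := \sum_(t < p.+1) _.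
have K : (z - zpos a - (ze - zpos a)) * Ssum = (z - zpos a)^+p.+1 - (ze - zpos a)^+p.+1.
  by rewrite subrXX.
have K' : (z - ze) * Ssum = (z - zpos a)^+p.+1 - (ze - zpos a)^+p.+1.
  by rewrite -K; congr (_ * _); ring.
rewrite mulrCA K'.
have hY : ze - zpos a != 0 by rewrite subr_eq0.
have hX : z - zpos a != 0 by rewrite subr_eq0.
have hYn : (ze - zpos a) ^+ p.+1 != 0 by rewrite expf_neq0.
have hXn : (z - zpos a) ^+ p.+1 != 0 by rewrite expf_neq0.
field; by rewrite hYn hXn.
Qed.

Lemma W_self ze : (forall a, ze != zpos a) ->
  (Wp ze).[ze] = (Pe m).[ze] * twist' m lev zpos ze.
Proof.
move=> hze; rewrite /twist' /Wp horner_sum mulr_sumr; apply: eq_bigr => a _.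
rewrite horner_sum mulr_sumr; apply: eq_bigr => p _.
have hY : ze - zpos a != 0 by rewrite subr_eq0.
rewrite horner_sum.
have E : forall t : 'I_p.+1, (((- lev a p / (ze - zpos a) ^+ p.+1) * (ze - zpos a) ^+ t) *:
      (('X - (zpos a)%:P) ^+ (p - t) * Pe (fun c => m c - (c == a) * p.+1)%N)).[ze]
  = (- lev a p / (ze - zpos a) ^+ p.+1) * ((Pe m).[ze] / (ze - zpos a) ^+ p.+1) * (ze - zpos a) ^+ p.
  move=> t; rewrite hornerZ hornerM horner_exp hornerXsubC (horner_Pe_sub _ _ (delta_le _ _ _)) //.
  rewrite prod_delta /=.
  have -> : (ze - zpos a) ^+ p = (ze - zpos a) ^+ t * (ze - zpos a) ^+ (p - t).
    by rewrite -exprD subnKC // -ltnS.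
  ring.
rewrite (eq_bigr _ (fun t _ => E t)) sumr_const card_ord -mulr_natr.
have hYn : (ze - zpos a) ^+ p.+1 != 0 by rewrite expf_neq0.
have -> : (ze - zpos a) ^+ p.+2 = (ze - zpos a) ^+ p.+1 * (ze - zpos a) ^+ p.+1 / (ze - zpos a) ^+ p.
  rewrite -!exprD.
  have hp : (ze - zpos a) ^+ p != 0 by rewrite expf_neq0.
  apply: (mulIf hp); rewrite mulfVK // -exprD; congr (_ ^+ _); lia.
have hp : (ze - zpos a) ^+ p != 0 by rewrite expf_neq0.
field; by rewrite hYn hp.
Qed.

Lemma W_size ze : (size (Wp ze) <= M)%N.
Proof.
have Hi : forall (I : Type) (r : seq I) (P : pred I) (F : I -> {poly C}),
  (forall i, P i -> (size (F i) <= M)%N) -> (size (\sum_(i <- r | P i) F i)%R <= M)%N.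
  move=> I r P F h; apply: (big_ind (fun q : {poly C} => (size q <= M)%N)).
  - by rewrite size_poly0.
  - by move=> x y hx hy; rewrite (leq_trans (size_add _ _)) // geq_max hx hy.
  - exact: h.
rewrite /Wp; apply: (Hi) => a _; apply: (Hi) => p _; apply: (Hi) => t _.
rewrite (leq_trans (size_scale_leq _ _)) //.
rewrite size_monicM ?monic_exp ?monicXsubC ?monic_neq0 ?Pe_monic //.
rewrite size_exp_XsubC size_Pe sum_sub ?sum_delta; last exact: delta_le.
have := m_le_M a; have := ltn_ord p; have := ltn_ord t; lia.
Qed.

Lemma W_coef ze : (Wp ze)`_M.-1 = - (twist m lev zpos linf ze + linf).
Proof.
rewrite /twist subrK -sumrN /Wp coef_sum; apply: eq_bigr => a _.
rewrite -sumrN coef_sum; apply: eq_bigr => p _.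
rewrite coef_sum big_ord_recl [\sum_(i < p) _]big1 ?addr0; last first.
  move=> t _; rewrite lift0 coefZ coef_big ?mulr0 //.
  rewrite size_monicM ?monic_exp ?monicXsubC ?monic_neq0 ?Pe_monic //.
  rewrite size_exp_XsubC size_Pe sum_sub ?sum_delta; last exact: delta_le.
  have := m_le_M a; have := ltn_ord p; have := ltn_ord t; rewrite /bump /=; lia.
rewrite coefZ coef_monic_top ?mulr1 ?expr0 ?mulr1 ?mulNr //.
  by rewrite monicMr ?monic_exp ?monicXsubC ?Pe_monic.
rewrite size_monicM ?monic_exp ?monicXsubC ?monic_neq0 ?Pe_monic //.
rewrite size_exp_XsubC size_Pe sum_sub ?sum_delta; last exact: delta_le.
have := m_le_M a; have := ltn_ord p; rewrite /=; lia.
Qed.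

Variable zeta : 'I_M -> C.
Hypothesis linf0 : linf != 0.
Hypothesis zinj : injective zeta.
Hypothesis zpole : forall i a, zeta i != zpos a.
Hypothesis zroot : forall i, twist m lev zpos linf (zeta i) = 0.
Hypothesis zsimple : forall i, twist' m lev zpos (zeta i) != 0.

Lemma Wzz i j : (Wp (zeta i)).[zeta j] =
  if i == j then (Pe m).[zeta i] * twist' m lev zpos (zeta i) else 0.
Proof.
case: eqP => [<-|/eqP hij]; first exact: W_self.
have h := @W_eval (zeta i) (zeta j) (zpole i) (zpole j).
rewrite !zroot subr0 mulr0 in h.
move/eqP: h; rewrite mulf_eq0 subr_eq0 => /orP[/eqP/zinj hji|/eqP //].
by rewrite hji eqxx in hij.
Qed.

Lemma Wii_neq0 i : (Pe m).[zeta i] * twist' m lev zpos (zeta i) != 0.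
Proof. by rewrite mulf_neq0 ?(@DPe_neq0 (zeta i) (zpole i)) ?zsimple. Qed.

Lemma EJ (P : {poly C}) : (size P <= M)%N ->
  P`_M.-1 = (- linf) * \sum_i P.[zeta i] / (Wp (zeta i)).[zeta i].
Proof.
move=> hP.
set L := \sum_i (P.[zeta i] / (Wp (zeta i)).[zeta i]) *: Wp (zeta i).
have Lz : forall j, L.[zeta j] = P.[zeta j].
  move=> j; rewrite /L horner_sum (bigD1 j) //= big1 ?addr0.
    by rewrite hornerZ divfK // Wzz eqxx Wii_neq0.
  move=> i /negbTE hij; by rewrite hornerZ (Wzz i j) hij mulr0.
have hL : (size L <= M)%N.
  rewrite /L; apply: (big_ind (fun q : {poly C} => (size q <= M)%N)).
  - by rewrite size_poly0.
  - by move=> x y hx hy; rewrite (leq_trans (size_add _ _)) // geq_max hx hy.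
  - by move=> i _; rewrite (leq_trans (size_scale_leq _ _)) // W_size.
have LP : L = P.
  apply/eqP; rewrite -subr_eq0; apply/negPn/negP => hnz.
  have := max_poly_roots hnz (rs := [seq zeta i | i <- enum 'I_M]).
  rewrite size_map size_enum_ord map_inj_uniq ?enum_uniq //.
  have hs : (size (L - P)%R <= M)%N.
    by rewrite (leq_trans (size_add _ _)) // size_opp geq_max hL hP.
  have Hall : all (root (L - P)) [seq zeta i | i <- enum 'I_M].
    apply/allP => x /mapP [j _ ->]; by rewrite /root hornerD hornerN Lz subrr.
  by move=> /(_ Hall isT); rewrite ltnNge hs.
rewrite -{1}LP /L coef_sum mulr_sumr; apply: eq_bigr => i _.
by rewrite coefZ W_coef zroot add0r mulrC.
Qed.

Lemma Key (f : S -> nat) : (forall c, f c <= m c)%N -> (0 < \sum_c f c)%N ->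
  \sum_i (twist' m lev zpos (zeta i) * \prod_c (zeta i - zpos c) ^+ f c)^-1
  = ((\sum_c f c)%N == 1%N)%:R / (- linf).
Proof.
move=> hf hpos.
have hsz : size (Pe (fun c => m c - f c)%N) = (M - \sum_c f c).+1%N.
  by rewrite size_Pe sum_sub.
have hle : (\sum_c f c <= M)%N by exact: leq_sum.
have := EJ (Pe (fun c => m c - f c)%N).
rewrite hsz.
have -> : (M - \sum_c f c < M)%N.
  by move: hle hpos; lia.
move=> /(_ isT) E.
have hc : (Pe (fun c => m c - f c)%N)`_M.-1 = ((\sum_c f c)%N == 1%N)%:R.
  case: eqP => [h1|h1].
    apply: coef_monic_top; first exact: Pe_monic.
    rewrite hsz; move: hle h1; lia.
  apply: coef_big; rewrite hsz; move: hle h1 hpos; lia.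
rewrite hc in E; rewrite E mulrAC divff ?oppr_eq0 // mul1r; apply: eq_bigr => i _.
rewrite (horner_Pe_sub _ _ hf) ?zpole // Wzz eqxx.
have hD := @DPe_neq0 (zeta i) (zpole i).
have hT := zsimple i.
have hPi : \prod_c (zeta i - zpos c) ^+ f c != 0.
  apply/prodf_neq0 => c _; by rewrite expf_neq0 // subr_eq0.
field; by rewrite hD hT hPi.
Qed.

Lemma K2f (a b : S) k1 k2 :
  (forall c, ((c == a) * k1 + (c == b) * k2 <= m c)%N) -> (0 < k1 + k2)%N ->
  \sum_i (twist' m lev zpos (zeta i) * ((zeta i - zpos a) ^+ k1 * (zeta i - zpos b) ^+ k2))^-1
  = ((k1 + k2)%N == 1%N)%:R / (- linf).
Proof.
move=> hf hpos.
have hs : (\sum_c ((c == a) * k1 + (c == b) * k2))%N = (k1 + k2)%N.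
  by rewrite big_split /= !sum_delta.
have := Key _ hf; rewrite hs => /(_ hpos) <-.
apply: eq_bigr => i _; congr (_ * _)^-1.
by rewrite -(prod_delta (fun c => zeta i - zpos c) a k1) -(prod_delta (fun c => zeta i - zpos c) b k2) -big_split; apply: eq_bigr => c _; rewrite exprD.
Qed.

Lemma K1 (a b : S) k1 k2 : a != b -> (0 < k1 <= m a)%N -> (0 < k2 <= m b)%N ->
  \sum_i (twist' m lev zpos (zeta i) * ((zeta i - zpos a) ^+ k1 * (zeta i - zpos b) ^+ k2))^-1 = 0.
Proof.
move=> hab /andP[h1 h1'] /andP[h2 h2'].
rewrite K2f; last by rewrite addn_gt0 h1.
  have -> : ((k1 + k2)%N == 1%N) = false by apply/eqP; lia.
  by rewrite mul0r.
move=> c; case: (eqVneq c a) => [->|hca].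
  by rewrite (negbTE hab) ?eqxx; move: h1'; lia.
case: (eqVneq c b) => [->|hcb]; first by rewrite ?eqxx; move: h2'; lia.
by rewrite !mul0n.
Qed.

Lemma K2 (a : S) k : (0 < k <= m a)%N ->
  \sum_i (twist' m lev zpos (zeta i) * (zeta i - zpos a) ^+ k)^-1 = (k == 1%N)%:R / (- linf).
Proof.
move=> /andP[h1 h1'].
have := @K2f a a k 0; rewrite addn0 => <-.
- by apply: eq_bigr => i _; rewrite expr0 mulr1.
- move=> c; case: (eqVneq c a) => [->|_]; by rewrite ?mul1n ?mul0n addn0.
- exact: h1.
Qed.

Definition sfun (a : S) (k : nat) : C :=
  - \sum_i (twist' m lev zpos (zeta i) * (zeta i - zpos a) ^+ k.+2)^-1.

Lemma s_small a k : (k.+2 <= m a)%N -> sfun a k = 0.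
Proof. move=> h; by rewrite /sfun K2 ?mul0r ?oppr0 //= (leq_trans _ h). Qed.


Definition Gs (a : S) (k : nat) : C :=
  \sum_i (twist' m lev zpos (zeta i) * (zeta i - zpos a) ^+ k)^-1.

Lemma s_eq (a : S) r : (r < m a)%N ->
  \sum_(p < m a - r) sfun a (p + (m a).-1) * lev a (p + r) = ((m a).-1 == r)%:R.
Proof.
move=> hr.
pose k0 := (m a - r)%N.
have Z : \sum_i (twist' m lev zpos (zeta i) * (zeta i - zpos a) ^+ k0)^-1
           * twist m lev zpos linf (zeta i) = 0.
  by rewrite big1 // => i _; rewrite zroot mulr0.
have E1 : \sum_i (twist' m lev zpos (zeta i) * (zeta i - zpos a) ^+ k0)^-1
           * twist m lev zpos linf (zeta i)
  = \sum_c \sum_(p < m c) lev c p *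
       \sum_i (twist' m lev zpos (zeta i) * ((zeta i - zpos a) ^+ k0 * (zeta i - zpos c) ^+ p.+1))^-1
    - linf * Gs a k0.
  rewrite /Gs mulr_sumr.
  transitivity (\sum_i \sum_c \sum_(p < m c) lev c p *
       (twist' m lev zpos (zeta i) * ((zeta i - zpos a) ^+ k0 * (zeta i - zpos c) ^+ p.+1))^-1
    - \sum_i linf * (twist' m lev zpos (zeta i) * (zeta i - zpos a) ^+ k0)^-1).
    rewrite -sumrB; apply: eq_bigr => i _; rewrite /twist mulrBr mulr_sumr.
    congr (_ - _); last by rewrite mulrC.
    apply: eq_bigr => c _; rewrite mulr_sumr; apply: eq_bigr => p _.
    rewrite !invfM; ring.
  congr (_ - _); rewrite exchange_big; apply: eq_bigr => c _.
  rewrite exchange_big; apply: eq_bigr => p _; by rewrite mulr_sumr.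
rewrite E1 (bigD1 a) //= [\sum_(c | c != a) _]big1 ?addr0 in Z; last first.
  move=> c hca; rewrite big1 // => p _; rewrite K1 ?mulr0 //.
  - by rewrite eq_sym.
  - by rewrite /k0; apply/andP; split; lia.
  - by rewrite ltn_ord.
rewrite /Gs K2 in Z; last by rewrite /k0; apply/andP; split; lia.
rewrite -(big_mkord xpredT (fun p => lev a p * \sum_i (twist' m lev zpos (zeta i) *
   ((zeta i - zpos a) ^+ k0 * (zeta i - zpos a) ^+ p.+1))^-1)) in Z.
rewrite (@big_cat_nat _ _ _ r 0 (m a) _ _ (leq0n r) (ltnW hr)) /= in Z.
rewrite big_nat_cond big1 ?add0r in Z; last first.
  move=> p /andP[/andP[_ hp] _].
  have -> : \sum_i (twist' m lev zpos (zeta i) *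
      ((zeta i - zpos a) ^+ k0 * (zeta i - zpos a) ^+ p.+1))^-1
     = Gs a (k0 + p.+1) by apply: eq_bigr => i _; rewrite exprD.
  rewrite /Gs K2 /k0; last by apply/andP; split; lia.
  have -> : ((m a - r + p.+1)%N == 1%N) = false by apply/eqP; lia.
  by rewrite mul0r mulr0.
rewrite -{1}[r]add0n big_addn big_mkord in Z.
have hk : ((m a).-1 == r) = (k0 == 1%N) by rewrite /k0; apply/eqP/eqP; lia.
have E2 : \sum_(p < m a - r) sfun a (p + (m a).-1) * lev a (p + r)
  = - \sum_(p < m a - r) lev a (p + r) * \sum_i (twist' m lev zpos (zeta i) *
           ((zeta i - zpos a) ^+ k0 * (zeta i - zpos a) ^+ (p + r).+1))^-1.
  rewrite -sumrN; apply: eq_bigr => p _; rewrite /sfun mulNr [_ * lev a _]mulrC; congr (- (_ * _)).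
  apply: eq_bigr => i _; rewrite -exprD; congr ((_ * _ ^+ _)^-1); rewrite /k0; lia.
rewrite E2 hk; move/eqP: Z; rewrite subr_eq0 => /eqP ->.
field; exact: linf0.
Qed.



Hypothesis mpos : forall a, (0 < m a)%N.
Hypothesis levtop : forall a, lev a (m a).-1 != 0.
Variable eta : S -> nat -> C.
Hypothesis heta : eta_sol m lev eta.

Lemma eta_small a k : (k < (m a).-1)%N -> eta a k = 0.
Proof.
move=> hk.
have hm := mpos a.
have := heta a k (m a).-1.
have h1 : (k < m a)%N by lia.
have h2 : ((m a).-1 < m a)%N by lia.
move=> /(_ h1 h2).
have -> : (m a - (m a).-1)%N = 1%N by lia.
rewrite big_ord1 !add0n.
have -> : (k == (m a).-1) = false by apply/eqP; lia.
move/eqP; rewrite mulf_eq0 (negbTE (levtop a)) orbF => /eqP //.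
Qed.

Lemma eta_s a k : (k < (m a).-1 + m a)%N -> eta a k = sfun a k.
Proof.
move=> hk; have hm := mpos a.
case: (ltnP k (m a).-1) => hk1.
  by rewrite eta_small // s_small //; lia.
pose d p := eta a p - sfun a p.
have hd : forall r, (r < m a)%N ->
    \sum_(p < m a - r) d (p + (m a).-1)%N * lev a (p + r)%N = 0.
  move=> r hr; rewrite /d.
  have e1 := heta a (m a).-1 r.
  have h2 : ((m a).-1 < m a)%N by lia.
  rewrite (eq_bigr (fun p : 'I_(m a - r) => eta a (p + (m a).-1)%N * lev a (p + r)%N
                    - sfun a (p + (m a).-1)%N * lev a (p + r)%N)); last by move=> p _; rewrite mulrBl.
  by rewrite sumrB e1 // s_eq // subrr.
have step : forall j, (j < m a)%N -> (forall p, (p < j)%N -> d (p + (m a).-1)%N = 0) ->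
    d (j + (m a).-1)%N = 0.
  move=> j hj IH.
  have := hd ((m a).-1 - j)%N; have hr : ((m a).-1 - j < m a)%N by lia.
  move=> /(_ hr).
  have -> : (m a - ((m a).-1 - j))%N = j.+1 by lia.
  rewrite big_ord_recr /= big1 ?add0r; last by move=> p _; rewrite IH ?mul0r.
  have -> : (j + ((m a).-1 - j))%N = (m a).-1 by lia.
  move/eqP; rewrite mulf_eq0 (negbTE (levtop a)) orbF => /eqP //.
have all : forall n j, (j < n)%N -> (j < m a)%N -> d (j + (m a).-1)%N = 0.
  elim=> [//|n IHn] j hjn hj; apply: step => // p hp; apply: IHn; lia.
have := all (k - (m a).-1).+1 (k - (m a).-1)%N (ltnSn _).
have -> : (k - (m a).-1 + (m a).-1)%N = k by lia.
move=> /(_ ltac:(lia)) /eqP; rewrite /d subr_eq0 => /eqP //.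
Qed.

Lemma coefK a q b r : (q < m a)%N -> (r < m b)%N ->
  \sum_i (twist' m lev zpos (zeta i))^-1 *
     ((zeta i - zpos a) ^- q.+1 * (zeta i - zpos b) ^- r.+1)
  = - ((a == b)%:R * eta a (q + r)%N).
Proof.
move=> hq hr.
have E : forall i, (twist' m lev zpos (zeta i))^-1 *
     ((zeta i - zpos a) ^- q.+1 * (zeta i - zpos b) ^- r.+1)
   = (twist' m lev zpos (zeta i) * ((zeta i - zpos a) ^+ q.+1 * (zeta i - zpos b) ^+ r.+1))^-1.
  by move=> i; rewrite !invfM.
rewrite (eq_bigr _ (fun i _ => E i)).
case: (eqVneq a b) => [eab|hab].
  subst b.
  rewrite mul1r eta_s; last by have := mpos a; lia.
  rewrite /sfun opprK; apply: eq_bigr => i _; by rewrite -exprD addSn addnS.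
rewrite K1 // ?mul0r ?oppr0 //; apply/andP; split => //.
Qed.

End Part1.

Section Part2.
Variable R : realType.
Local Notation C := (R[i]).
Variable n : nat.
Variable br : 'rV[C]_n -> 'rV[C]_n -> 'rV[C]_n.
Variable A : comAlgType C.
Variable intD : (R -> A) -> A.
Hypothesis hlin : linear_int intD.

Lemma intD0 : intD (fun _ => 0) = 0.
Proof.
have := hlin 1 (fun _ => 0) (fun _ => 0).
have -> : (fun x : R => 1 *: (0 : A) + 0) = (fun _ => 0).
  by apply: funext => x; rewrite scale1r addr0.
rewrite scale1r => h.
have : intD (fun _ => 0) + intD (fun _ => 0) - intD (fun _ => 0)
     = intD (fun _ => 0) - intD (fun _ => 0) by rewrite -h.
by rewrite addrK subrr.
Qed.

Lemma intDZ c (F : R -> A) : intD (fun x => c *: F x) = c *: intD F.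
Proof.
have := hlin c F (fun _ => 0); rewrite intD0 addr0 => <-.
by congr intD; apply: funext => x; rewrite addr0.
Qed.

Lemma intDD (F G : R -> A) : intD (fun x => F x + G x) = intD F + intD G.
Proof.
have := hlin 1 F G; rewrite scale1r => <-.
by congr intD; apply: funext => x; rewrite scale1r.
Qed.

Lemma intD_sum (I : Type) (r : seq I) (P : pred I) (F : I -> R -> A) :
  intD (fun x => \sum_(i <- r | P i) F i x) = \sum_(i <- r | P i) intD (F i).
Proof.
elim: r => [|h t IH].
  rewrite big_nil -[RHS]intD0; congr intD; apply: funext => x; by rewrite big_nil.
rewrite big_cons -IH.
have -> : (fun x => \sum_(i <- h :: t | P i) F i x) =
   (fun x => if P h then F h x + \sum_(i <- t | P i) F i x else \sum_(i <- t | P i) F i x).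
  by apply: funext => x; rewrite big_cons.
case: (P h) => //; exact: intDD.
Qed.

Lemma kappaA_addL (X X' Y : 'rV[A]_n) : kappaA br (X + X') Y = kappaA br X Y + kappaA br X' Y.
Proof.
rewrite /kappaA -big_split; apply: eq_bigr => c _; rewrite -big_split; apply: eq_bigr => d _.
by rewrite mxE mulrDl scalerDr.
Qed.

Lemma kappaA_0L (Y : 'rV[A]_n) : kappaA br 0 Y = 0.
Proof. rewrite /kappaA big1 // => c _; rewrite big1 // => d _; by rewrite mxE mul0r scaler0. Qed.

Lemma kappaA_addR (X Y Y' : 'rV[A]_n) : kappaA br X (Y + Y') = kappaA br X Y + kappaA br X Y'.
Proof.
rewrite /kappaA -big_split; apply: eq_bigr => c _; rewrite -big_split; apply: eq_bigr => d _.
by rewrite mxE mulrDr scalerDr.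
Qed.

Lemma kappaA_0R (X : 'rV[A]_n) : kappaA br X 0 = 0.
Proof. rewrite /kappaA big1 // => c _; rewrite big1 // => d _; by rewrite mxE mulr0 scaler0. Qed.

Lemma kappaA_sumL (I : Type) (r : seq I) (P : pred I) (X : I -> 'rV[A]_n) (Y : 'rV[A]_n) :
  kappaA br (\sum_(i <- r | P i) X i) Y = \sum_(i <- r | P i) kappaA br (X i) Y.
Proof. exact: (big_morph (fun Z => kappaA br Z Y) (fun x y => kappaA_addL x y Y) (kappaA_0L Y)). Qed.

Lemma kappaA_sumR (I : Type) (r : seq I) (P : pred I) (X : 'rV[A]_n) (Y : I -> 'rV[A]_n) :
  kappaA br X (\sum_(i <- r | P i) Y i) = \sum_(i <- r | P i) kappaA br X (Y i).
Proof. exact: (big_morph (fun Z => kappaA br X Z) (fun x y => kappaA_addR X x y) (kappaA_0R X)). Qed.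

Lemma kappaA_scaleL (s : A) (X Y : 'rV[A]_n) : kappaA br (s *: X) Y = s * kappaA br X Y.
Proof.
rewrite /kappaA mulr_sumr; apply: eq_bigr => c _; rewrite mulr_sumr; apply: eq_bigr => d _.
by rewrite mxE -mulrA scalerAr.
Qed.

Lemma kappaA_scaleR (s : A) (X Y : 'rV[A]_n) : kappaA br X (s *: Y) = s * kappaA br X Y.
Proof.
rewrite /kappaA mulr_sumr; apply: eq_bigr => c _; rewrite mulr_sumr; apply: eq_bigr => d _.
by rewrite mxE mulrCA scalerAr.
Qed.

Variable S : finType.
Variables (m : S -> nat) (zpos : S -> C) (J : S -> nat -> R -> 'rV[A]_n).

Lemma kappaGamma ze x :
  kappaA br (Gamma m zpos J ze x) (Gamma m zpos J ze x) =
  \sum_a \sum_(p < m a) \sum_b \sum_(q < m b)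
     ((ze - zpos a) ^- p.+1 * (ze - zpos b) ^- q.+1) *: kappaA br (J a p x) (J b q x).
Proof.
rewrite /Gamma kappaA_sumL; apply: eq_bigr => a _; rewrite kappaA_sumL; apply: eq_bigr => p _.
rewrite kappaA_scaleL kappaA_sumR mulr_sumr; apply: eq_bigr => b _.
rewrite kappaA_sumR mulr_sumr; apply: eq_bigr => q _.
by rewrite kappaA_scaleR !mulr_algl scalerA.
Qed.

Lemma intGamma ze :
  intD (fun x => kappaA br (Gamma m zpos J ze x) (Gamma m zpos J ze x)) =
  \sum_a \sum_(p < m a) \sum_b \sum_(q < m b)
     ((ze - zpos a) ^- p.+1 * (ze - zpos b) ^- q.+1) *:
        intD (fun x => kappaA br (J a p x) (J b q x)).
Proof.
rewrite (_ : (fun x => _) = (fun x => \sum_a \sum_(p < m a) \sum_b \sum_(q < m b)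
     ((ze - zpos a) ^- p.+1 * (ze - zpos b) ^- q.+1) *: kappaA br (J a p x) (J b q x))); last first.
  by apply: funext => x; exact: kappaGamma.
rewrite intD_sum; apply: eq_bigr => a _; rewrite intD_sum; apply: eq_bigr => p _.
rewrite intD_sum; apply: eq_bigr => b _; rewrite intD_sum; apply: eq_bigr => q _.
exact: intDZ.
Qed.

Lemma sumQ (I0 : finType) (c : I0 -> C) (z : I0 -> C) :
  \sum_i c i *: intD (fun x => kappaA br (Gamma m zpos J (z i) x) (Gamma m zpos J (z i) x)) =
  \sum_a \sum_(p < m a) \sum_b \sum_(q < m b)
    (\sum_i c i * ((z i - zpos a) ^- p.+1 * (z i - zpos b) ^- q.+1)) *:
        intD (fun x => kappaA br (J a p x) (J b q x)).
Proof.
rewrite (eq_bigr (fun i => \sum_a \sum_(p < m a) \sum_b \sum_(q < m b)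
    (c i * ((z i - zpos a) ^- p.+1 * (z i - zpos b) ^- q.+1)) *:
        intD (fun x => kappaA br (J a p x) (J b q x)))); last first.
  move=> i _; rewrite intGamma scaler_sumr; apply: eq_bigr => a _.
  rewrite scaler_sumr; apply: eq_bigr => p _.
  rewrite scaler_sumr; apply: eq_bigr => b _.
  rewrite scaler_sumr; apply: eq_bigr => q _; by rewrite scalerA.
rewrite exchange_big; apply: eq_bigr => a _.
rewrite exchange_big; apply: eq_bigr => p _.
rewrite exchange_big; apply: eq_bigr => b _.
rewrite exchange_big; apply: eq_bigr => q _.
by rewrite scaler_suml.
Qed.

End Part2.

Theorem proposition2p3
  (R : realType) (n : nat) (br : 'rV[R[i]]_n -> 'rV[R[i]]_n -> 'rV[R[i]]_n)
  (tau : 'rV[R[i]]_n -> 'rV[R[i]]_n)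
  (A : comAlgType R[i]) (pb : A -> A -> A) (cj : A -> A)
  (Dk : option R) (intD : (R -> A) -> A)
  (S : finType) (bar : S -> S) (m : S -> nat) (lev : S -> nat -> R[i])
  (zpos : S -> R[i]) (linf : R[i])
  (J : S -> nat -> R -> 'rV[A]_n)
  (eta : S -> nat -> R[i])
  (zeta : 'I_(\sum_a m a) -> R[i]) (P : A) :
  (* the Lie algebra and its real form *)
  is_simple_lie br ->
  is_real_form_inv br tau ->
  (* the algebra of observables *)
  is_poisson pb -> is_conjA cj -> linear_int intD ->
  (forall L, Dk = Some L -> 0 < L) ->
  (* the data of the model *)
  site_data bar m lev zpos linf ->
  (* the realisation *)
  (forall L a p x, Dk = Some L -> (p < m a)%N -> J a p (x + L) = J a p x) ->
  current_brackets Dk br pb intD m lev J ->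
  (forall a p x, (p < m a)%N -> tauA cj tau (J a p x) = J (bar a) p x) ->
  (* eta^alpha_[p] *)
  eta_sol m lev eta ->
  (* zeta_1, ..., zeta_M are the zeros of phi, all simple *)
  injective zeta ->
  (forall i a, zeta i != zpos a) ->
  (forall i, twist m lev zpos linf (zeta i) = 0) ->
  (forall i, twist' m lev zpos (zeta i) != 0) ->
  (forall z, (forall a, z != zpos a) -> twist m lev zpos linf z = 0 ->
     exists i, z = zeta i) ->
  (* P is the momentum, and the realisation is suitable *)
  is_momentum Dk br pb intD m J P ->
  \sum_a Dcharge0 br intD m eta J a = P ->
  P = \sum_i Qcharge br intD m lev zpos J (zeta i).
Proof.
move=> _ _ _ _ hlin _ hsite _ _ _ heta zinj zpole zroot zsimple _ _ hP.
case: hsite => _ _ _ [hml _] [_ linf0].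
have mpos : forall a, (0 < m a)%N by move=> a; case: (hml a).
have levtop : forall a, lev a (m a).-1 != 0 by move=> a; case: (hml a).
have cK := @coefK _ _ _ _ _ _ _ linf0 zinj zpole zroot zsimple mpos levtop _ heta.
rewrite -hP /Qcharge.
rewrite (@sumQ _ _ br _ _ hlin _ m zpos J _ (fun i => - (2 * twist' m lev zpos (zeta i))^-1) zeta).
symmetry.
apply: eq_bigr => a _; rewrite /Dcharge0 scaler_sumr; apply: eq_bigr => p _.
rewrite scaler_sumr (bigD1 a) //= [\sum_(b | b != a) _]big1 ?addr0; last first.
  move=> b hba; rewrite big1 // => q _.
  rewrite (_ : \sum_i _ = 0) ?scale0r //.
  transitivity (- 2^-1 * \sum_i (twist' m lev zpos (zeta i))^-1 *
      ((zeta i - zpos a) ^- p.+1 * (zeta i - zpos b) ^- q.+1)).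
    rewrite mulr_sumr; apply: eq_bigr => i _; rewrite invfM; ring.
  by rewrite cK // eq_sym (negbTE hba) mul0r oppr0 mulr0.
apply: eq_bigr => q _; rewrite scalerA; congr (_ *: _).
transitivity (- 2^-1 * \sum_i (twist' m lev zpos (zeta i))^-1 *
    ((zeta i - zpos a) ^- p.+1 * (zeta i - zpos a) ^- q.+1)).
  rewrite mulr_sumr; apply: eq_bigr => i _; rewrite invfM; ring.
by rewrite cK // eqxx mul1r mulrN mulNr opprK.
Qed.
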